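(* Let $u\in\mathbb C$ and $a\in\mathbb C\setminus\{0\}$, and let $s$ range over a domain on which $(t+u)^2+s\neq0$ for all $t\in[-1,1]$, with a branch $R(t,s)=\sqrt{(t+u)^2+s}$ continuous in $t$ and holomorphic in $s$; fix $\sqrt a$ and put $\sqrt{2a}=\sqrt2\sqrt a$. For integers $\nu\ge0$ define $$I_\nu(s)=\frac{1}{\sqrt{2a}}\int_{-1}^1\frac{(t+u)^\nu\,dt}{\sqrt{t+1}\,R(t,s)} .$$ Then, writing $R_1=R(1,s)=\sqrt{(u+1)^2+s}$, $$\frac{\partial I_{\nu+2}}{\partial s}=-\frac12I_\nu-s\frac{\partial I_\nu}{\partial s},$$ $$\frac{\partial}{\partial s}(I_2+I_1)=u\frac{\partial I_1}{\partial s}-\frac14I_0+\frac{1}{2\sqrt a\,R_1},$$ $$\frac{\partial}{\partial s}(I_3-I_1)=(u^2-2u)\frac{\partial I_1}{\partial s}-\frac34I_1+\frac{u-1}{4}I_0+\frac{u}{\sqrt a\,R_1}.$$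
   Context: $\sqrt{t+1}$ denotes the nonnegative real square root for $t\in[-1,1]$. The paper considers $s\ge0$ with $u,a$ fixed parameters arising from $v,w$ via $u=v(v+2z)/(v^2-4w)$, $a=v^2-4w$. *)

(* Defs.v *)
From Stdlib Require Import Reals.
From Coquelicot Require Import Coquelicot.

Open Scope R_scope.

(* I_nu(s) = 1/(sqrt 2 * sqrt a) * int_{-1}^{1} (t+u)^nu / (sqrt(t+1) * Rb t s) dt,
   the integral being the improper (generalized) Riemann integral, since the
   integrand is singular at t = -1.  [sa] is the fixed square root of a. *)
Definition Inu (u sa : C) (Rb : R -> C -> C) (nu : nat) (s : C) : C :=
  Cmult (Cinv (Cmult (RtoC (sqrt 2)) sa))
    (@RInt_gen C_R_CompleteNormedModule
       (fun t : R => Cdiv (Cpow (Cplus (RtoC t) u) nu)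
                          (Cmult (RtoC (sqrt (t + 1))) (Rb t s)))
       (at_right (-1)) (at_point 1)).

(* Main.v *)
Require Import Defs.
From Stdlib Require Import Reals Lra Psatz.
From Coquelicot Require Import Coquelicot.
Open Scope R_scope.

Lemma locC (z : C) (P : C -> Prop) :
  (exists eps, 0 < eps /\ forall w, Cmod (Cminus w z) < eps -> P w) -> locally z P.
Proof.
intros [eps [He H]]. apply (locally_le_locally_norm z).
exists (mkposreal eps He). intros w Hw. apply H.
exact Hw.
Qed.

Lemma locC_inv (z : C) (P : C -> Prop) :
  locally z P -> exists eps, 0 < eps /\ forall w, Cmod (Cminus w z) < eps -> P w.
Proof.
intros H. destruct (locally_norm_le_locally z P H) as [eps He].
exists eps. split. apply cond_pos. intros w Hw. apply He.
exact Hw.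
Qed.

Lemma locR (z : R) (P : R -> Prop) :
  (exists eps, 0 < eps /\ forall w, Rabs (w - z) < eps -> P w) -> locally z P.
Proof.
intros [eps [He H]]. exists (mkposreal eps He). intros w Hw. apply H. exact Hw.
Qed.

Lemma locR_inv (z : R) (P : R -> Prop) :
  locally z P -> exists eps, 0 < eps /\ forall w, Rabs (w - z) < eps -> P w.
Proof.
intros [eps He]. exists eps. split. apply cond_pos. intros w Hw. apply He. exact Hw.
Qed.

Definition CC (f : R -> C) x := forall eps, 0 < eps -> exists d, 0 < d /\
  forall y, Rabs (y - x) < d -> Cmod (Cminus (f y) (f x)) < eps.

Lemma Cmod_sub_triangle (a b c : C) : Cmod (Cminus a c) <= Cmod (Cminus a b) + Cmod (Cminus b c).
Proof.
replace (Cminus a c) with (Cplus (Cminus a b) (Cminus b c)) by ring. apply Cmod_triangle.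
Qed.

Lemma Cmod_rev (a b : C) : Cmod a - Cmod (Cminus a b) <= Cmod b.
Proof.
assert (H := Cmod_triangle (Cminus a b) b).
replace (Cplus (Cminus a b) b) with a in H by ring. lra.
Qed.

Lemma CC_const (c : C) x : CC (fun _ => c) x.
Proof. intros eps He. exists 1. split. lra. intros y _.
replace (Cminus c c) with (RtoC 0) by ring. rewrite Cmod_0. lra. Qed.

Lemma CC_RtoC (g : R -> R) x : continuous g x -> CC (fun y => RtoC (g y)) x.
Proof.
intros Hg eps He.
destruct (locR_inv x _ (Hg (fun w => Rabs (w - g x) < eps) (ltac:(exists (mkposreal eps He); intros w Hw; exact Hw))))
  as [d [Hd H]].
exists d. split. exact Hd. intros y Hy. rewrite <- RtoC_minus, Cmod_R. apply H. exact Hy.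
Qed.

Lemma CC_plus f g x : CC f x -> CC g x -> CC (fun y => Cplus (f y) (g y)) x.
Proof.
intros Hf Hg eps He.
destruct (Hf (eps/2) ltac:(lra)) as [d1 [Hd1 H1]].
destruct (Hg (eps/2) ltac:(lra)) as [d2 [Hd2 H2]].
exists (Rmin d1 d2). split. apply Rmin_pos; lra. intros y Hy.
replace (Cminus (Cplus (f y) (g y)) (Cplus (f x) (g x))) with
  (Cplus (Cminus (f y) (f x)) (Cminus (g y) (g x))) by ring.
eapply Rle_lt_trans. apply Cmod_triangle.
assert (Hy1 : Rabs (y - x) < d1) by (eapply Rlt_le_trans; [exact Hy| apply Rmin_l]).
assert (Hy2 : Rabs (y - x) < d2) by (eapply Rlt_le_trans; [exact Hy| apply Rmin_r]).
specialize (H1 y Hy1). specialize (H2 y Hy2). lra.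
Qed.

Lemma CC_opp f x : CC f x -> CC (fun y => Copp (f y)) x.
Proof.
intros Hf eps He. destruct (Hf eps He) as [d [Hd H]]. exists d. split. exact Hd.
intros y Hy. replace (Cminus (Copp (f y)) (Copp (f x))) with (Copp (Cminus (f y) (f x))) by ring.
rewrite Cmod_opp. auto.
Qed.

Lemma CC_mult f g x : CC f x -> CC g x -> CC (fun y => Cmult (f y) (g y)) x.
Proof.
intros Hf Hg eps He.
set (A := Cmod (f x)). set (B := Cmod (g x)).
assert (HA : 0 <= A) by apply Cmod_ge_0. assert (HB : 0 <= B) by apply Cmod_ge_0.
set (e1 := eps / (2 * (B + 2))).
set (e2 := Rmin 1 (eps / (2 * (A + 1)))).
assert (He1 : 0 < e1). { apply Rdiv_lt_0_compat; lra. }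
assert (He2 : 0 < e2). { apply Rmin_pos. lra. apply Rdiv_lt_0_compat; lra. }
destruct (Hf e1 He1) as [d1 [Hd1 H1]].
destruct (Hg e2 He2) as [d2 [Hd2 H2]].
exists (Rmin d1 d2). split. apply Rmin_pos; lra. intros y Hy.
assert (Hy1 : Rabs (y - x) < d1) by (eapply Rlt_le_trans; [exact Hy| apply Rmin_l]).
assert (Hy2 : Rabs (y - x) < d2) by (eapply Rlt_le_trans; [exact Hy| apply Rmin_r]).
specialize (H1 y Hy1). specialize (H2 y Hy2).
replace (Cminus (Cmult (f y) (g y)) (Cmult (f x) (g x))) with
  (Cplus (Cmult (Cminus (f y) (f x)) (g y)) (Cmult (f x) (Cminus (g y) (g x)))) by ring.
eapply Rle_lt_trans. apply Cmod_triangle. rewrite !Cmod_mult.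
assert (Hgy : Cmod (g y) <= B + 1).
{ assert (H := Cmod_rev (g y) (g x)). fold B in H.
  assert (e2 <= 1) by apply Rmin_l. lra. }
assert (Hgy0 : 0 <= Cmod (g y)) by apply Cmod_ge_0.
assert (Hfd : 0 <= Cmod (Cminus (f y) (f x))) by apply Cmod_ge_0.
assert (Hgd : 0 <= Cmod (Cminus (g y) (g x))) by apply Cmod_ge_0.
assert (T1 : Cmod (Cminus (f y) (f x)) * Cmod (g y) <= e1 * (B + 1)).
{ apply Rmult_le_compat; lra. }
assert (T1' : e1 * (B + 1) < eps / 2).
{ unfold e1. apply Rmult_lt_reg_r with (2 * (B+2)). lra.
  field_simplify; nra. }
assert (T2 : A * Cmod (Cminus (g y) (g x)) <= A * (eps / (2 * (A + 1)))).
{ apply Rmult_le_compat_l. lra. assert (e2 <= eps / (2 * (A + 1))) by apply Rmin_r. lra. }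
assert (T2' : A * (eps / (2 * (A + 1))) < eps / 2).
{ apply Rmult_lt_reg_r with (2 * (A+1)). lra. field_simplify; nra. }
fold A. lra.
Qed.

Lemma CC_minus f g x : CC f x -> CC g x -> CC (fun y => Cminus (f y) (g y)) x.
Proof. intros. apply (CC_plus f (fun y => Copp (g y))); auto. apply CC_opp; auto. Qed.

Lemma CC_inv f x : CC f x -> f x <> RtoC 0 -> CC (fun y => Cinv (f y)) x.
Proof.
intros Hf Hn eps He.
set (a := Cmod (f x)). assert (Ha : 0 < a) by (apply Cmod_gt_0; exact Hn).
set (e := Rmin (a/2) (eps * a * a / 2)).
assert (Hee : 0 < e). { apply Rmin_pos. lra. apply Rdiv_lt_0_compat; [|lra]. apply Rmult_lt_0_compat; [|lra]. nra. }
destruct (Hf e Hee) as [d [Hd H]]. exists d. split. exact Hd. intros y Hy.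
specialize (H y Hy).
assert (H1 : e <= a/2) by apply Rmin_l. assert (H2 : e <= eps * a * a / 2) by apply Rmin_r.
assert (Hfy : a / 2 <= Cmod (f y)).
{ assert (T := Cmod_rev (f x) (f y)). replace (Cminus (f x) (f y)) with (Copp (Cminus (f y) (f x))) in T by ring.
  rewrite Cmod_opp in T. fold a in T. lra. }
assert (Hny : f y <> RtoC 0). { intro E. rewrite E, Cmod_0 in Hfy. lra. }
replace (Cminus (Cinv (f y)) (Cinv (f x))) with (Cdiv (Copp (Cminus (f y) (f x))) (Cmult (f y) (f x))).
2:{ field. split; auto. }
rewrite Cmod_div. 2:{ apply Cmult_neq_0; auto. }
rewrite Cmod_opp, Cmod_mult. fold a.
apply Rmult_lt_reg_r with (Cmod (f y) * a). nra.
unfold Rdiv. rewrite Rmult_assoc, Rinv_l. 2:{ nra. }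
assert (a * a / 2 <= Cmod (f y) * a) by nra. nra.
Qed.

Lemma CC_pow f x n : CC f x -> CC (fun y => Cpow (f y) n) x.
Proof.
intros Hf. induction n as [|n IH].
- simpl. apply CC_const.
- simpl. apply (CC_mult f (fun y => Cpow (f y) n)); auto.
Qed.

Lemma CC_div f g x : CC f x -> CC g x -> g x <> RtoC 0 -> CC (fun y => Cdiv (f y) (g y)) x.
Proof. intros. unfold Cdiv. apply (CC_mult f (fun y => Cinv (g y))); auto. apply CC_inv; auto. Qed.

Lemma CC_ext f g x : (forall y, f y = g y) -> CC f x -> CC g x.
Proof. intros E H eps He. destruct (H eps He) as [d [Hd H']]. exists d. split; auto.
intros y Hy. rewrite <- !E. auto. Qed.

Lemma CC_continuous f x : CC f x -> continuous f x.
Proof.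
intros Hf P HP. apply locC_inv in HP. destruct HP as [eps [He HP]].
destruct (Hf eps He) as [d [Hd H]]. apply locR. exists d. split; auto.
Qed.

Lemma continuous_CC f x : continuous f x -> CC f x.
Proof.
intros Hf eps He.
assert (L : locally (f x) (fun w => Cmod (Cminus w (f x)) < eps)).
{ apply locC. exists eps. split; auto. }
apply Hf in L. apply locR_inv in L. exact L.
Qed.

Definition clamp t := Rmax (-1) (Rmin 1 t).
Lemma clamp_in t : -1 <= clamp t <= 1.
Proof. unfold clamp, Rmax, Rmin. repeat destruct Rle_dec; lra. Qed.
Lemma clamp_id t : -1 <= t <= 1 -> clamp t = t.
Proof. unfold clamp, Rmax, Rmin. repeat destruct Rle_dec; lra. Qed.
Lemma clamp_lip x y : Rabs (clamp y - clamp x) <= Rabs (y - x).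
Proof. unfold clamp, Rmax, Rmin. repeat destruct Rle_dec; unfold Rabs; repeat destruct Rcase_abs; lra. Qed.

Lemma CC_clamp (g : R -> C) t :
  filterlim g (within (fun t' => -1 <= t' <= 1) (locally (clamp t))) (locally (g (clamp t))) ->
  CC (fun y => g (clamp y)) t.
Proof.
intros Hg eps He.
assert (L : locally (g (clamp t)) (fun w => Cmod (Cminus w (g (clamp t))) < eps)).
{ apply locC. exists eps. split; auto. }
apply Hg in L. apply locR_inv in L. destruct L as [d [Hd L]].
exists d. split; auto. intros y Hy. apply L.
eapply Rle_lt_trans. apply clamp_lip. exact Hy. apply clamp_in.
Qed.

Definition HD (f : R -> C) x (l : C) := forall eps, 0 < eps -> exists d, 0 < d /\
  forall y, Rabs (y - x) < d ->
  Cmod (Cminus (Cminus (f y) (f x)) (Cmult (RtoC (y - x)) l)) <= eps * Rabs (y - x).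

Lemma HD_factor f g h x l :
  HD f x l ->
  (exists d0, 0 < d0 /\ forall y, Rabs (y - x) < d0 ->
     Cminus (g y) (g x) = Cmult (Cminus (f y) (f x)) (h y)) ->
  CC h x -> HD g x (Cmult l (h x)).
Proof.
intros Hf [d0 [Hd0 Hg]] Hh eps He.
set (Hx := Cmod (h x)). set (L := Cmod l).
assert (HHx : 0 <= Hx) by apply Cmod_ge_0. assert (HL : 0 <= L) by apply Cmod_ge_0.
set (e1 := eps / (2 * (Hx + 1))).
set (e2 := Rmin 1 (eps / (2 * (L + 1)))).
assert (He1 : 0 < e1). { apply Rdiv_lt_0_compat; lra. }
assert (He2 : 0 < e2). { apply Rmin_pos. lra. apply Rdiv_lt_0_compat; lra. }
destruct (Hf e1 He1) as [d1 [Hd1 H1]].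
destruct (Hh e2 He2) as [d2 [Hd2 H2]].
exists (Rmin d0 (Rmin d1 d2)). split. repeat apply Rmin_pos; lra. intros y Hy.
assert (Hy0 : Rabs (y - x) < d0) by (eapply Rlt_le_trans; [exact Hy| apply Rmin_l]).
assert (Hy' : Rabs (y - x) < Rmin d1 d2) by (eapply Rlt_le_trans; [exact Hy| apply Rmin_r]).
assert (Hy1 : Rabs (y - x) < d1) by (eapply Rlt_le_trans; [exact Hy'| apply Rmin_l]).
assert (Hy2 : Rabs (y - x) < d2) by (eapply Rlt_le_trans; [exact Hy'| apply Rmin_r]).
specialize (H1 y Hy1). specialize (H2 y Hy2). specialize (Hg y Hy0).
rewrite Hg.
replace (Cminus (Cmult (Cminus (f y) (f x)) (h y)) (Cmult (RtoC (y - x)) (Cmult l (h x)))) with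
  (Cplus (Cmult (Cminus (Cminus (f y) (f x)) (Cmult (RtoC (y - x)) l)) (h y))
         (Cmult (Cmult (RtoC (y - x)) l) (Cminus (h y) (h x)))) by ring.
eapply Rle_trans. apply Cmod_triangle. rewrite !Cmod_mult, Cmod_R. fold L.
assert (Hhy : Cmod (h y) <= Hx + 1).
{ assert (T := Cmod_rev (h y) (h x)). fold Hx in T. assert (e2 <= 1) by apply Rmin_l. lra. }
assert (Ha : 0 <= Rabs (y - x)) by apply Rabs_pos.
assert (Hd : 0 <= Cmod (Cminus (h y) (h x))) by apply Cmod_ge_0.
assert (Hhy0 : 0 <= Cmod (h y)) by apply Cmod_ge_0.
assert (T1 : Cmod (Cminus (Cminus (f y) (f x)) (Cmult (RtoC (y - x)) l)) * Cmod (h y)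
             <= e1 * Rabs (y - x) * (Hx + 1)).
{ apply Rmult_le_compat; auto. apply Cmod_ge_0. }
assert (T1' : e1 * (Hx + 1) = eps / 2). { unfold e1. field. lra. }
assert (T2 : Rabs (y - x) * L * Cmod (Cminus (h y) (h x)) <= Rabs (y - x) * L * (eps / (2 * (L + 1)))).
{ apply Rmult_le_compat_l. nra. assert (e2 <= eps / (2 * (L + 1))) by apply Rmin_r. lra. }
assert (T2' : L * (eps / (2 * (L + 1))) <= eps / 2).
{ apply Rmult_le_reg_r with (2 * (L+1)). lra. field_simplify; nra. }
nra.
Qed.

Lemma HD_plus f g x l1 l2 : HD f x l1 -> HD g x l2 -> HD (fun y => Cplus (f y) (g y)) x (Cplus l1 l2).
Proof.
intros Hf Hg eps He.
destruct (Hf (eps/2) ltac:(lra)) as [d1 [Hd1 H1]].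
destruct (Hg (eps/2) ltac:(lra)) as [d2 [Hd2 H2]].
exists (Rmin d1 d2). split. apply Rmin_pos; lra. intros y Hy.
assert (Hy1 : Rabs (y - x) < d1) by (eapply Rlt_le_trans; [exact Hy| apply Rmin_l]).
assert (Hy2 : Rabs (y - x) < d2) by (eapply Rlt_le_trans; [exact Hy| apply Rmin_r]).
specialize (H1 y Hy1). specialize (H2 y Hy2).
replace (Cminus (Cminus (Cplus (f y) (g y)) (Cplus (f x) (g x))) (Cmult (RtoC (y - x)) (Cplus l1 l2)))
 with (Cplus (Cminus (Cminus (f y) (f x)) (Cmult (RtoC (y - x)) l1))
             (Cminus (Cminus (g y) (g x)) (Cmult (RtoC (y - x)) l2))) by ring.
eapply Rle_trans. apply Cmod_triangle. lra.
Qed.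

Lemma HD_ext f g x l : (exists d0, 0 < d0 /\ forall y, Rabs (y - x) < d0 -> f y = g y) ->
  HD f x l -> HD g x l.
Proof.
intros [d0 [Hd0 E]] Hf eps He. destruct (Hf eps He) as [d [Hd H]].
exists (Rmin d0 d). split. apply Rmin_pos; lra. intros y Hy.
assert (Hy1 : Rabs (y - x) < d0) by (eapply Rlt_le_trans; [exact Hy| apply Rmin_l]).
assert (Hy2 : Rabs (y - x) < d) by (eapply Rlt_le_trans; [exact Hy| apply Rmin_r]).
rewrite <- (E y Hy1), <- (E x). auto. rewrite Rminus_diag, Rabs_R0. auto.
Qed.

Lemma HD_const (c : C) x : HD (fun _ => c) x (RtoC 0).
Proof.
intros eps He. exists 1. split. lra. intros y _.
replace (Cminus (Cminus c c) (Cmult (RtoC (y - x)) (RtoC 0))) with (RtoC 0) by ring.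
rewrite Cmod_0. assert (0 <= Rabs (y - x)) by apply Rabs_pos. nra.
Qed.

Lemma HD_id x : HD (fun y => RtoC y) x (RtoC 1).
Proof.
intros eps He. exists 1. split. lra. intros y _.
replace (Cminus (Cminus (RtoC y) (RtoC x)) (Cmult (RtoC (y - x)) (RtoC 1))) with (RtoC 0).
2:{ rewrite <- RtoC_minus. ring. }
rewrite Cmod_0. assert (0 <= Rabs (y - x)) by apply Rabs_pos. nra.
Qed.

Lemma HD_sq x : HD (fun y => RtoC (y * y - 1)) x (RtoC (2 * x)).
Proof.
intros eps He. exists eps. split. lra. intros y Hy.
replace (Cminus (Cminus (RtoC (y * y - 1)) (RtoC (x * x - 1))) (Cmult (RtoC (y - x)) (RtoC (2 * x))))
  with (RtoC ((y - x) * (y - x))).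
2:{ rewrite <- RtoC_minus, <- RtoC_mult, <- RtoC_minus. f_equal. ring. }
rewrite Cmod_R, Rabs_mult. assert (0 <= Rabs (y - x)) by apply Rabs_pos. nra.
Qed.

Lemma HD_CC f x l : HD f x l -> CC f x.
Proof.
intros Hf eps He.
destruct (Hf 1 ltac:(lra)) as [d [Hd H]].
set (L := Cmod l). assert (HL : 0 <= L) by apply Cmod_ge_0.
exists (Rmin d (eps / (L + 2))). split. apply Rmin_pos; auto. apply Rdiv_lt_0_compat; lra.
intros y Hy.
assert (Hy1 : Rabs (y - x) < d) by (eapply Rlt_le_trans; [exact Hy| apply Rmin_l]).
assert (Hy2 : Rabs (y - x) < eps / (L + 2)) by (eapply Rlt_le_trans; [exact Hy| apply Rmin_r]).
specialize (H y Hy1).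
assert (T := Cmod_triangle (Cminus (Cminus (f y) (f x)) (Cmult (RtoC (y - x)) l)) (Cmult (RtoC (y - x)) l)).
replace (Cplus (Cminus (Cminus (f y) (f x)) (Cmult (RtoC (y - x)) l)) (Cmult (RtoC (y - x)) l))
  with (Cminus (f y) (f x)) in T by ring.
rewrite Cmod_mult, Cmod_R in T. fold L in T.
assert (0 <= Rabs (y - x)) by apply Rabs_pos.
assert (Rabs (y - x) * (L + 2) < eps).
{ apply Rmult_lt_reg_r with (/ (L+2)). apply Rinv_0_lt_compat; lra.
  rewrite Rmult_assoc, Rinv_r by lra. lra. }
nra.
Qed.

Lemma HD_mult f g x l1 l2 : HD f x l1 -> HD g x l2 ->
  HD (fun y => Cmult (f y) (g y)) x (Cplus (Cmult l1 (g x)) (Cmult l2 (f x))).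
Proof.
intros Hf Hg.
apply (HD_ext (fun y => Cplus (Cplus (Cmult (f x) (g x)) (Cmult (Cminus (f y) (f x)) (g y)))
                               (Cmult (Cminus (g y) (g x)) (f x)))).
{ exists 1. split. lra. intros y _. ring. }
replace (Cplus (Cmult l1 (g x)) (Cmult l2 (f x))) with
  (Cplus (Cplus (RtoC 0) (Cmult l1 (g x))) (Cmult l2 (f x))) by ring.
apply (HD_plus (fun y => Cplus (Cmult (f x) (g x)) (Cmult (Cminus (f y) (f x)) (g y)))
               (fun y => Cmult (Cminus (g y) (g x)) (f x))).
- apply (HD_plus (fun _ => Cmult (f x) (g x)) (fun y => Cmult (Cminus (f y) (f x)) (g y))).
  apply HD_const.
  apply (HD_factor f _ g). auto. exists 1. split. lra. intros y _. ring. eapply HD_CC; eauto.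
- apply (HD_factor g _ (fun _ => f x)). auto. exists 1. split. lra. intros y _. ring. apply CC_const.
Qed.

Lemma HD_inv f x l : HD f x l -> f x <> RtoC 0 ->
  HD (fun y => Cinv (f y)) x (Cmult l (Copp (Cinv (Cmult (f x) (f x))))).
Proof.
intros Hf Hn.
assert (Hc := HD_CC f x l Hf).
destruct (Hc (Cmod (f x)) ltac:(apply Cmod_gt_0; auto)) as [d [Hd H]].
apply (HD_factor f _ (fun y => Copp (Cinv (Cmult (f y) (f x))))); auto.
- exists d. split; auto. intros y Hy. specialize (H y Hy).
  assert (f y <> RtoC 0).
  { intro E. rewrite E in H. replace (Cminus (RtoC 0) (f x)) with (Copp (f x)) in H by ring.
    rewrite Cmod_opp in H. lra. }
  field. split; auto.
- apply CC_opp. apply CC_inv. apply (CC_mult f (fun _ => f x)); auto. apply CC_const.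
  apply Cmult_neq_0; auto.
Qed.

Lemma HD_is_derive f x l : HD f x l -> @is_derive R_AbsRing C_R_NormedModule f x l.
Proof.
intros Hf. split. apply is_linear_scal_l.
intros x' Hx'. assert (Ex : x = x') by (apply (@is_filter_lim_locally_unique R_AbsRing R_NormedModule); exact Hx'). subst x'.
intros eps. destruct (Hf eps (cond_pos eps)) as [d [Hd H]].
apply locR. exists d. split; auto. intros y Hy. specialize (H y Hy).
rewrite <- Cmod_norm. 
change (Cmod (Cminus (Cminus (f y) (f x)) (scal (y - x) l)) <= eps * Rabs (y - x)).
rewrite scal_R_Cmult. exact H.
Qed.

Lemma is_RInt_Cmult (f : R -> C) a b l c :
  @is_RInt C_R_NormedModule f a b l ->
  @is_RInt C_R_NormedModule (fun x => Cmult c (f x)) a b (Cmult c l).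
Proof.
intros H.
assert (H1 := @is_RInt_fct_extend_fst R_NormedModule R_NormedModule f a b l H).
assert (H2 := @is_RInt_fct_extend_snd R_NormedModule R_NormedModule f a b l H).
destruct c as [c1 c2]. destruct l as [l1 l2]. simpl in H1, H2.
assert (K1 := is_RInt_minus _ _ _ _ _ _ (is_RInt_scal _ _ _ c1 _ H1) (is_RInt_scal _ _ _ c2 _ H2)).
assert (K2 := is_RInt_plus _ _ _ _ _ _ (is_RInt_scal _ _ _ c1 _ H2) (is_RInt_scal _ _ _ c2 _ H1)).
assert (K := @is_RInt_fct_extend_pair R_NormedModule R_NormedModule
   (fun x => Cmult (c1, c2) (f x)) a b _ _ K1 K2).
replace (Cmult (c1, c2) (l1, l2)) with
  (minus (scal c1 l1) (scal c2 l2), plus (scal c1 l2) (scal c2 l1)).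
exact K.
unfold Cmult, minus, plus, opp, scal; simpl. unfold mult; simpl. f_equal; ring.
Qed.

Lemma ex_RInt_CC (f : R -> C) a b : (forall x, Rmin a b <= x <= Rmax a b -> CC f x) ->
  @ex_RInt C_R_NormedModule f a b.
Proof.
intros H. apply (@ex_RInt_continuous C_R_CompleteNormedModule).
intros z Hz. apply CC_continuous. auto.
Qed.

Lemma RInt_Cmod_le (f : R -> C) a b lf M : a <= b ->
  (forall x, a <= x <= b -> Cmod (f x) <= M) ->
  @is_RInt C_R_NormedModule f a b lf -> Cmod lf <= M * (b - a).
Proof.
intros Hab Hb Hf.
rewrite Cmod_norm.
apply (norm_RInt_le f (fun _ => M) a b lf (M * (b - a)) Hab).
intros x Hx. rewrite <- Cmod_norm. auto. exact Hf.
replace (M * (b - a)) with (scal (b - a) M). apply (@is_RInt_const R_NormedModule).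
unfold scal; simpl. unfold mult; simpl. ring.
Qed.

Lemma CC_comp (g : R -> C) (p : R -> R) x : continuous p x -> CC g (p x) -> CC (fun y => g (p y)) x.
Proof.
intros Hp Hg eps He. destruct (Hg eps He) as [d [Hd H]].
assert (L : locally (p x) (fun w => Rabs (w - p x) < d)).
{ apply locR. exists d. split; auto. }
apply Hp in L. apply locR_inv in L. destruct L as [d' [Hd' L]].
exists d'. split; auto.
Qed.

Notation RIntC := (@RInt C_R_CompleteNormedModule).

Definition Rx (Rb : R -> C -> C) z t := Rb (clamp t) z.
Definition wx (u : C) x := Cplus (RtoC (x * x - 1)) u.
Definition kk u Rb z n x := Cdiv (Cmult (RtoC 2) (Cpow (wx u x) n)) (Rx Rb z (x * x - 1)).
Definition FF u (Rb : R -> C -> C) z n t :=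
  Cdiv (Cpow (Cplus (RtoC t) u) n) (Cmult (RtoC (sqrt (t + 1))) (Rb t z)).

Lemma CC_Rx (Rb : R -> C -> C) z :
  (forall t, -1 <= t <= 1 -> filterlim (fun t' => Rb t' z)
      (within (fun t' => -1 <= t' <= 1) (locally t)) (locally (Rb t z))) ->
  forall t, CC (Rx Rb z) t.
Proof. intros H t. apply (CC_clamp (fun t => Rb t z)). apply H. apply clamp_in. Qed.

Lemma Rx_nz (Rb : R -> C -> C) z :
  (forall t, -1 <= t <= 1 -> Rb t z <> RtoC 0) -> forall t, Rx Rb z t <> RtoC 0.
Proof. intros H t. apply H. apply clamp_in. Qed.

Lemma cont_sq x : continuous (fun y => y * y - 1) x.
Proof. apply continuity_pt_filterlim. reg. Qed.

Lemma CC_RtoC_sq x : CC (fun y => RtoC (y * y - 1)) x.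
Proof. apply (CC_RtoC (fun y => y * y - 1)). apply cont_sq. Qed.

Lemma CC_wx u x n : CC (fun y => Cpow (wx u y) n) x.
Proof. apply (CC_pow (wx u)). apply (CC_plus (fun y => RtoC (y * y - 1)) (fun _ => u)).
apply CC_RtoC_sq. apply CC_const. Qed.

Lemma CC_Rxsq Rb z x : (forall t, CC (Rx Rb z) t) -> CC (fun y => Rx Rb z (y * y - 1)) x.
Proof. intros H. apply (CC_comp (Rx Rb z) (fun y => y * y - 1)). apply cont_sq. apply H. Qed.

Lemma CC_kk u Rb z n x : (forall t, CC (Rx Rb z) t) -> (forall t, Rx Rb z t <> RtoC 0) ->
  CC (kk u Rb z n) x.
Proof.
intros H1 H2. unfold kk.
apply (CC_div (fun y => Cmult (RtoC 2) (Cpow (wx u y) n)) (fun y => Rx Rb z (y * y - 1))).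
apply (CC_mult (fun _ => RtoC 2) (fun y => Cpow (wx u y) n)). apply CC_const. apply CC_wx.
apply CC_Rxsq; auto. auto.
Qed.

Lemma subst_step u Rb z n a :
  (forall t, CC (Rx Rb z) t) -> (forall t, Rx Rb z t <> RtoC 0) ->
  -1 < a <= 1 ->
  @is_RInt C_R_NormedModule (FF u Rb z n) a 1 (RIntC (kk u Rb z n) (sqrt (a + 1)) (sqrt 2)).
Proof.
intros H1 H2 Ha.
set (G := fun t => Cdiv (Cpow (Cplus (RtoC t) u) n) (Cmult (RtoC (sqrt (t + 1))) (Rx Rb z t))).
assert (CG : forall t, -1 < t -> CC G t).
{ intros t Ht. unfold G.
  apply (CC_div (fun t => Cpow (Cplus (RtoC t) u) n) (fun t => Cmult (RtoC (sqrt (t + 1))) (Rx Rb z t))).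
  apply (CC_pow (fun t => Cplus (RtoC t) u)). apply (CC_plus (fun t => RtoC t) (fun _ => u)).
  apply (CC_RtoC (fun t => t)). apply continuous_id. apply CC_const.
  apply (CC_mult (fun t => RtoC (sqrt (t + 1))) (Rx Rb z)).
  apply (CC_RtoC (fun t => sqrt (t + 1))). apply continuous_sqrt_comp.
  apply continuity_pt_filterlim. reg. auto.
  apply Cmult_neq_0; auto. intro E.
  assert (0 < sqrt (t + 1)) by (apply sqrt_lt_R0; lra). 
  unfold RtoC in E. injection E. lra. }
assert (Hs : sqrt (a + 1) <= sqrt 2) by (apply sqrt_le_1_alt; lra).
assert (Hs0 : 0 <= sqrt (a + 1)) by apply sqrt_pos.
assert (HC := @is_RInt_comp C_R_CompleteNormedModule G (fun x => x * x - 1) (fun x => 2 * x) (sqrt (a + 1)) (sqrt 2)).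
rewrite Rmin_left, Rmax_right in HC by exact Hs.
rewrite sqrt_sqrt in HC by lra. rewrite sqrt_sqrt in HC by lra.
replace (a + 1 - 1) with a in HC by ring. replace (2 - 1) with 1 in HC by ring.
assert (HC2 : @is_RInt C_R_NormedModule (fun y => scal (2 * y) (G (y * y - 1))) (sqrt (a + 1)) (sqrt 2)
  (RIntC G a 1)).
{ apply HC.
  - intros x Hx. apply CC_continuous. apply CG.
    assert (a <= x * x - 1). { assert (sqrt (a+1) * sqrt (a+1) <= x * x) by (apply Rmult_le_compat; lra).
      rewrite sqrt_sqrt in H by lra. lra. } lra.
  - intros x Hx. split. auto_derive. auto. ring. apply continuity_pt_filterlim. reg. }
assert (E1 : RIntC (kk u Rb z n) (sqrt (a + 1)) (sqrt 2) = RIntC G a 1).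
{ apply is_RInt_unique. eapply is_RInt_ext. 2: exact HC2.
  rewrite Rmin_left, Rmax_right by exact Hs. intros x Hx.
  rewrite scal_R_Cmult. unfold G, kk, wx.
  replace (x * x - 1 + 1) with (x * x) by ring. rewrite sqrt_square by lra.
  rewrite RtoC_mult. match goal with |- ?a = ?b => change (@eq C a b) end. field. split. apply H2.
  intro E. unfold RtoC in E. injection E. lra. }
rewrite E1.
apply (@is_RInt_ext C_R_NormedModule G). rewrite Rmin_left, Rmax_right by lra. intros x Hx.
unfold G, FF, Rx. rewrite clamp_id by lra. reflexivity.
apply (@RInt_correct C_R_CompleteNormedModule). apply ex_RInt_CC. rewrite Rmin_left, Rmax_right by lra. intros x Hx. apply CG. lra.
Qed.

Lemma subst_gen u Rb z n :
  (forall t, CC (Rx Rb z) t) -> (forall t, Rx Rb z t <> RtoC 0) ->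
  @RInt_gen C_R_CompleteNormedModule (FF u Rb z n) (at_right (-1)) (at_point 1)
  = RIntC (kk u Rb z n) 0 (sqrt 2).
Proof.
intros H1 H2.
apply is_RInt_gen_unique.
set (If := fun x => RIntC (kk u Rb z n) x (sqrt 2)).
assert (Hc : continuous If 0).
{ apply (continuous_RInt_2 (kk u Rb z n) 0 (sqrt 2)).
  apply filter_forall. intros x. apply (@RInt_correct C_R_CompleteNormedModule).
  apply ex_RInt_CC. intros; apply CC_kk; auto. }
assert (Hc2 : continuous (fun a => If (sqrt (a + 1))) (-1)).
{ apply continuous_comp. apply continuous_sqrt_comp. apply continuity_pt_filterlim. reg.
  replace (-1 + 1) with 0 by ring. rewrite sqrt_0. exact Hc. }
intros P HP.
assert (E0 : If (sqrt (-1 + 1)) = RIntC (kk u Rb z n) 0 (sqrt 2)) by (unfold If; f_equal; replace (-1 + 1) with 0 by ring; apply sqrt_0).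
rewrite <- E0 in HP.
assert (HP' := Hc2 P HP). unfold filtermap in HP'.
apply Filter_prod with (fun a => -1 < a <= 1 /\ P (If (sqrt (a + 1)))) (fun b => b = 1).
- unfold at_right, within.
  assert (L : locally (-1) (fun a => a <= 1)).
  { apply locR. exists 1. split. lra. intros w Hw. unfold Rabs in Hw; destruct Rcase_abs in Hw; lra. }
  generalize (filter_and _ _ HP' L). apply filter_imp. intros a [Ha1 Ha2] Ha3. split. lra. exact Ha1.
- reflexivity.
- intros a b [Ha HPa] Hb. subst b. exists (If (sqrt (a + 1))). split. simpl.
  apply subst_step; auto. exact HPa.
Qed.

Definition kd u Rb z n x := Copp (Cdiv (Cpow (wx u x) n) (Cpow (Rx Rb z (x * x - 1)) 3)).
Definition JJ u Rb z n : C := RIntC (kk u Rb z n) 0 (sqrt 2).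
Definition JD u Rb z n : C := RIntC (kd u Rb z n) 0 (sqrt 2).

Lemma CC_kd u Rb z n x : (forall t, CC (Rx Rb z) t) -> (forall t, Rx Rb z t <> RtoC 0) ->
  CC (kd u Rb z n) x.
Proof.
intros H1 H2. unfold kd. apply (CC_opp (fun x => Cdiv (Cpow (wx u x) n) (Cpow (Rx Rb z (x * x - 1)) 3))).
apply (CC_div (fun y => Cpow (wx u y) n) (fun y => Cpow (Rx Rb z (y * y - 1)) 3)).
apply CC_wx. apply (CC_pow (fun y => Rx Rb z (y * y - 1))). apply CC_Rxsq; auto.
apply Cpow_nz. auto.
Qed.

Lemma holo_eps (g : C -> C) x : @ex_derive C_AbsRing C_NormedModule g x ->
  forall eps, 0 < eps -> exists d, 0 < d /\ forall y, Cmod (Cminus y x) < d -> Cmod (Cminus (g y) (g x)) < eps.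
Proof.
intros H eps He.
assert (Hc := ex_derive_continuous g x H).
assert (L : locally (g x) (fun w => Cmod (Cminus w (g x)) < eps)).
{ apply locC. exists eps. split; auto. }
apply Hc in L. destruct L as [d Hd]. exists d. split. apply cond_pos.
intros y Hy. apply Hd. exact Hy.
Qed.

Lemma deriv_from_bound (F : C -> C) s l K d :
  0 < d -> 0 <= K ->
  (forall z, Cmod (Cminus z s) < d ->
     Cmod (Cminus (Cminus (F z) (F s)) (Cmult (Cminus z s) l)) <= K * (Cmod (Cminus z s) * Cmod (Cminus z s))) ->
  @is_derive C_AbsRing C_NormedModule F s l.
Proof.
intros Hd HK H. split. apply is_linear_scal_l.
intros x' Hx'.
assert (Ex : s = x') by (apply (@is_filter_lim_locally_unique C_AbsRing (AbsRing_NormedModule C_AbsRing)); exact Hx').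
subst x'.
intros eps.
assert (Hd2 : 0 < Rmin d (eps / (K + 1))).
{ apply Rmin_pos; auto. apply Rdiv_lt_0_compat. apply cond_pos. lra. }
exists (mkposreal _ Hd2). intros y Hy.
change (Cmod (Cminus y s) < Rmin d (eps / (K + 1))) in Hy.
change (Cmod (Cminus (Cminus (F y) (F s)) (Cmult (Cminus y s) l)) <= eps * Cmod (Cminus y s)).
assert (Hy1 : Cmod (Cminus y s) < d) by (eapply Rlt_le_trans; [exact Hy|apply Rmin_l]).
assert (Hy2 : Cmod (Cminus y s) < eps / (K + 1)) by (eapply Rlt_le_trans; [exact Hy|apply Rmin_r]).
eapply Rle_trans. apply H; auto.
assert (0 <= Cmod (Cminus y s)) by apply Cmod_ge_0.
assert (K * Cmod (Cminus y s) <= eps).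
{ assert (Cmod (Cminus y s) * (K + 1) < eps).
  { apply Rmult_lt_reg_r with (/ (K+1)). apply Rinv_0_lt_compat; lra.
    rewrite Rmult_assoc, Rinv_r by lra. lra. }
  assert (0 < eps) by apply cond_pos. nra. }
nra.
Qed.

Lemma cont_eps (f : R -> R) x :
  (forall eps, 0 < eps -> exists d, 0 < d /\ forall y, Rabs (y - x) < d -> Rabs (f y - f x) < eps) ->
  continuity_pt f x.
Proof.
intros H. apply continuity_pt_filterlim. intros P HP. apply locR_inv in HP.
destruct HP as [eps [He HP]]. destruct (H eps He) as [d [Hd Hd']].
apply locR. exists d. split; auto.
Qed.

Lemma Cmod_diff_le (a b : C) : Rabs (Cmod a - Cmod b) <= Cmod (Cminus a b).
Proof.
assert (H1 := Cmod_rev a b). assert (H2 := Cmod_rev b a).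
replace (Cminus b a) with (Copp (Cminus a b)) in H2 by ring. rewrite Cmod_opp in H2.
unfold Rabs. destruct Rcase_abs; lra.
Qed.

Lemma CC_Cmod_cont f x : CC f x -> continuity_pt (fun y => Cmod (f y)) x.
Proof.
intros H. apply cont_eps. intros eps He. destruct (H eps He) as [d [Hd H']].
exists d. split; auto. intros y Hy. eapply Rle_lt_trans. apply Cmod_diff_le. auto.
Qed.

Definition qq (u : C) t (s : C) := Cplus (Cpow (Cplus (RtoC t) u) 2) s.

Lemma lower_bound (u s : C) (Rb : R -> C -> C) :
  (forall t, -1 <= t <= 1 -> qq u t s <> RtoC 0) ->
  (forall t, -1 <= t <= 1 -> Cmult (Rb t s) (Rb t s) = qq u t s) ->
  exists m, 0 < m /\ forall t, -1 <= t <= 1 -> m <= Cmod (Rb t s).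
Proof.
intros Hnz Hsq.
assert (Cq : forall t, CC (fun t => qq u t s) t).
{ intros t. unfold qq. apply (CC_plus (fun t => Cpow (Cplus (RtoC t) u) 2) (fun _ => s)).
  apply (CC_pow (fun t => Cplus (RtoC t) u)). apply (CC_plus (fun t => RtoC t) (fun _ => u)).
  apply (CC_RtoC (fun t => t)). apply continuous_id. apply CC_const. apply CC_const. }
destruct (continuity_ab_min (fun t => Cmod (qq u t s)) (-1) 1 ltac:(lra)) as [mx [Hmx Hmx']].
{ intros c _. apply CC_Cmod_cont. apply Cq. }
set (mu := Cmod (qq u mx s)).
assert (Hmu : 0 < mu) by (apply Cmod_gt_0; apply Hnz; auto).
exists (sqrt mu). split. apply sqrt_lt_R0; auto.
intros t Ht. specialize (Hmx t Ht). simpl in Hmx. fold mu in Hmx.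
rewrite <- Hsq in Hmx by auto. rewrite Cmod_mult in Hmx.
rewrite <- (sqrt_square (Cmod (Rb t s))) by apply Cmod_ge_0.
apply sqrt_le_1_alt. exact Hmx.
Qed.

Definition c01 l := Rmax 0 (Rmin 1 l).
Lemma c01_in l : 0 <= c01 l <= 1.
Proof. unfold c01, Rmax, Rmin. repeat destruct Rle_dec; lra. Qed.
Lemma c01_lip x y : Rabs (c01 y - c01 x) <= Rabs (y - x).
Proof. unfold c01, Rmax, Rmin. repeat destruct Rle_dec; unfold Rabs; repeat destruct Rcase_abs; lra. Qed.
Lemma c01_0 : c01 0 = 0. Proof. unfold c01, Rmax, Rmin. repeat destruct Rle_dec; lra. Qed.
Lemma c01_1 : c01 1 = 1. Proof. unfold c01, Rmax, Rmin. repeat destruct Rle_dec; lra. Qed.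

Lemma sign_lemma (u s z : C) (Rb : R -> C -> C) (D : C -> Prop) m r0 t :
  0 < m -> 0 < r0 -> (forall w, Cmod (Cminus w s) < r0 -> D w) ->
  (forall w, D w -> Cmult (Rb t w) (Rb t w) = qq u t w) ->
  (forall w, D w -> @ex_derive C_AbsRing C_NormedModule (fun z => Rb t z) w) ->
  m <= Cmod (Rb t s) ->
  Cmod (Cminus z s) < Rmin r0 (m * m / 4) ->
  m <= Cmod (Cplus (Rb t z) (Rb t s)).
Proof.
intros Hm Hr0 HD Hsq Hhol Hb Hz.
assert (Hz1 : Cmod (Cminus z s) < r0) by (eapply Rlt_le_trans; [exact Hz|apply Rmin_l]).
assert (Hz2 : Cmod (Cminus z s) < m * m / 4) by (eapply Rlt_le_trans; [exact Hz|apply Rmin_r]).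
destruct (Rle_lt_dec m (Cmod (Cplus (Rb t z) (Rb t s)))) as [ok|bad]; auto. exfalso.
set (p := fun l => Cplus s (Cmult (RtoC (c01 l)) (Cminus z s))).
assert (Hp : forall l, Cmod (Cminus (p l) s) <= Cmod (Cminus z s)).
{ intros l. unfold p. replace (Cminus (Cplus s (Cmult (RtoC (c01 l)) (Cminus z s))) s)
    with (Cmult (RtoC (c01 l)) (Cminus z s)) by ring.
  rewrite Cmod_mult, Cmod_R. assert (H := c01_in l). rewrite Rabs_pos_eq by lra.
  assert (0 <= Cmod (Cminus z s)) by apply Cmod_ge_0. nra. }
assert (HpD : forall l, D (p l)).
{ intros l. apply HD. eapply Rle_lt_trans. apply Hp. auto. }
set (psi := fun l => Cmod (Cminus (Rb t (p l)) (Rb t s))).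
assert (Cpsi : continuity psi).
{ intros l. apply cont_eps. intros eps He.
  destruct (holo_eps (fun z => Rb t z) (p l) (Hhol _ (HpD l)) eps He) as [d1 [Hd1 H1]].
  set (M := Cmod (Cminus z s)). assert (HM : 0 <= M) by apply Cmod_ge_0.
  exists (d1 / (M + 1)). split. apply Rdiv_lt_0_compat; lra.
  intros y Hy. unfold psi. eapply Rle_lt_trans. apply Cmod_diff_le.
  replace (Cminus (Cminus (Rb t (p y)) (Rb t s)) (Cminus (Rb t (p l)) (Rb t s)))
    with (Cminus (Rb t (p y)) (Rb t (p l))) by ring.
  apply H1. unfold p.
  replace (Cminus (Cplus s (Cmult (RtoC (c01 y)) (Cminus z s))) (Cplus s (Cmult (RtoC (c01 l)) (Cminus z s))))
    with (Cmult (RtoC (c01 y - c01 l)) (Cminus z s)) by (rewrite RtoC_minus; ring).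
  rewrite Cmod_mult, Cmod_R. fold M.
  assert (T := c01_lip l y).
  assert (Rabs (y - l) * (M + 1) < d1).
  { apply Rmult_lt_reg_r with (/ (M+1)). apply Rinv_0_lt_compat; lra.
    rewrite Rmult_assoc, Rinv_r by lra. lra. }
  assert (0 <= Rabs (c01 y - c01 l)) by apply Rabs_pos. nra. }
assert (Ds : D s). { apply HD. replace (Cminus s s) with (RtoC 0) by ring. rewrite Cmod_0. lra. }
assert (Hsum : forall ph, 2 * Cmod (Rb t s) <= Cmod (Cminus ph (Rb t s)) + Cmod (Cplus ph (Rb t s))).
{ intros ph. replace (2 * Cmod (Rb t s)) with (Cmod (Cmult (RtoC 2) (Rb t s))).
  2:{ rewrite Cmod_mult, Cmod_R, Rabs_pos_eq; lra. }
  replace (Cmult (RtoC 2) (Rb t s)) with (Cplus (Cplus ph (Rb t s)) (Copp (Cminus ph (Rb t s)))).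
  2:{ unfold RtoC. unfold Cplus, Copp, Cminus, Cmult; simpl. destruct ph, (Rb t s); simpl. f_equal; ring. }
  eapply Rle_trans. apply Cmod_triangle. rewrite Cmod_opp. lra. }
assert (Hdich : forall l, psi l <> m).
{ intros l E. unfold psi in E.
  assert (Hprod : Cmult (Cminus (Rb t (p l)) (Rb t s)) (Cplus (Rb t (p l)) (Rb t s)) = Cminus (p l) s).
  { replace (Cmult (Cminus (Rb t (p l)) (Rb t s)) (Cplus (Rb t (p l)) (Rb t s)))
     with (Cminus (Cmult (Rb t (p l)) (Rb t (p l))) (Cmult (Rb t s) (Rb t s))) by ring.
    rewrite (Hsq _ (HpD l)), (Hsq _ Ds). unfold qq. ring. }
  assert (Hn : Cmod (Cminus (Rb t (p l)) (Rb t s)) * Cmod (Cplus (Rb t (p l)) (Rb t s)) < m * m / 4).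
  { rewrite <- Cmod_mult, Hprod. eapply Rle_lt_trans. apply Hp. auto. }
  specialize (Hsum (Rb t (p l))). rewrite E in Hn, Hsum. nra. }
assert (P0 : psi 0 = 0).
{ unfold psi, p. rewrite c01_0.
  replace (Cplus s (Cmult (RtoC 0) (Cminus z s))) with s by ring.
  replace (Cminus (Rb t s) (Rb t s)) with (RtoC 0) by ring. apply Cmod_0. }
assert (P1 : m < psi 1).
{ unfold psi, p. rewrite c01_1.
  replace (Cplus s (Cmult (RtoC 1) (Cminus z s))) with z by ring.
  specialize (Hsum (Rb t z)). lra. }
destruct (IVT_gen psi 0 1 m Cpsi) as [x [_ Hx]].
{ rewrite Rmin_left, Rmax_right by lra. lra. }
exact (Hdich x Hx).
Qed.

Lemma real_bound a b P m : 0 < m -> m <= b -> m <= P -> m / 2 <= a ->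
  (P + b) / (b * b * b * (P * P) * a) <= 4 / (m * m * m * m * m).
Proof.
intros Hm Hb HP Ha.
assert (0 < b) by lra. assert (0 < P) by lra. assert (0 < a) by lra.
replace ((P + b) / (b * b * b * (P * P) * a)) with (/ (b * b * b * P * a) + / (b * b * P * P * a)) by (field; lra).
replace (4 / (m * m * m * m * m)) with (/ (m * m * m * m * (m/2)) + / (m * m * m * m * (m/2))) by (field; lra).
assert (m * m * m <= b * b * b) by (apply Rmult_le_compat; try nra; apply Rmult_le_compat; nra).
assert (m * m <= b * b) by nra.
apply Rplus_le_compat; apply Rinv_le_contravar.
1,3: repeat apply Rmult_lt_0_compat; lra.
- apply Rmult_le_compat; try nra. apply Rmult_le_compat; nra.
- apply Rmult_le_compat; try nra. apply Rmult_le_compat; try nra.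
Qed.

Lemma point_bound (w A B d : C) n m W :
  0 < m -> m <= Cmod B -> m <= Cmod (Cplus A B) -> Cmod d <= m * m / 4 ->
  d = Cminus (Cmult A A) (Cmult B B) -> Cmod w <= W ->
  Cmod (Cminus (Cminus (Cdiv (Cmult (RtoC 2) (Cpow w n)) A) (Cdiv (Cmult (RtoC 2) (Cpow w n)) B))
               (Cmult d (Copp (Cdiv (Cpow w n) (Cpow B 3)))))
  <= W ^ n * (4 / (m * m * m * m * m)) * (Cmod d * Cmod d).
Proof.
intros Hm HB HP Hd Ed HW.
assert (NB : B <> RtoC 0). { intro E. rewrite E, Cmod_0 in HB. lra. }
assert (NP : Cplus A B <> RtoC 0). { intro E. rewrite E, Cmod_0 in HP. lra. }
assert (HAB : Cmod (Cminus A B) <= m / 4).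
{ assert (E : Cminus A B = Cdiv d (Cplus A B)) by (rewrite Ed; field; auto).
  rewrite E, Cmod_div by auto.
  apply Rmult_le_reg_r with (Cmod (Cplus A B)). lra. unfold Rdiv. rewrite Rmult_assoc, Rinv_l by lra.
  nra. }
assert (HA : m / 2 <= Cmod A).
{ assert (T := Cmod_rev B (Cminus B A)). replace (Cminus B (Cminus B A)) with A in T by ring.
  replace (Cminus B A) with (Copp (Cminus A B)) in T by ring. rewrite Cmod_opp in T. lra. }
assert (NA : A <> RtoC 0). { intro E. rewrite E, Cmod_0 in HA. lra. }
replace (Cminus (Cminus (Cdiv (Cmult (RtoC 2) (Cpow w n)) A) (Cdiv (Cmult (RtoC 2) (Cpow w n)) B))
               (Cmult d (Copp (Cdiv (Cpow w n) (Cpow B 3)))))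
  with (Cmult (Cmult (Cpow w n) (Cmult d d))
         (Cdiv (Cplus (Cplus A B) B) (Cmult (Cmult (Cmult B (Cmult B B)) (Cmult (Cplus A B) (Cplus A B))) A))).
2:{ rewrite Ed. simpl. field. repeat split; auto. }
rewrite !Cmod_mult, Cmod_div, !Cmod_mult, Cmod_pow.
2:{ repeat apply Cmult_neq_0; auto. }
assert (T1 : Cmod (Cplus (Cplus A B) B) <= Cmod (Cplus A B) + Cmod B) by apply Cmod_triangle.
assert (T2 : Cmod w ^ n <= W ^ n). { apply pow_incr. split. apply Cmod_ge_0. auto. }
assert (T3 := real_bound (Cmod A) (Cmod B) (Cmod (Cplus A B)) m Hm HB HP HA).
assert (T4 : Cmod (Cplus (Cplus A B) B) / (Cmod B * (Cmod B * Cmod B) * (Cmod (Cplus A B) * Cmod (Cplus A B)) * Cmod A)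
   <= 4 / (m * m * m * m * m)).
{ eapply Rle_trans. 2: exact T3. replace (Cmod B * (Cmod B * Cmod B)) with (Cmod B * Cmod B * Cmod B) by ring.
  unfold Rdiv. apply Rmult_le_compat_r. left. apply Rinv_0_lt_compat.
  assert (0 < Cmod A) by lra. assert (0 < Cmod B) by lra. assert (0 < Cmod (Cplus A B)) by lra.
  repeat apply Rmult_lt_0_compat; auto. auto. }
assert (0 <= Cmod w ^ n) by (apply pow_le; apply Cmod_ge_0).
assert (0 <= Cmod d * Cmod d) by (apply Rmult_le_pos; apply Cmod_ge_0).
assert (0 <= Cmod (Cplus (Cplus A B) B) / (Cmod B * (Cmod B * Cmod B) * (Cmod (Cplus A B) * Cmod (Cplus A B)) * Cmod A)).
{ apply Rdiv_le_0_compat. apply Cmod_ge_0. assert (0 < Cmod A) by lra. assert (0 < Cmod B) by lra. assert (0 < Cmod (Cplus A B)) by lra.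
  repeat apply Rmult_lt_0_compat; auto. }
replace (W ^ n * (4 / (m * m * m * m * m)) * (Cmod d * Cmod d)) with
  ((W ^ n * (Cmod d * Cmod d)) * (4 / (m * m * m * m * m))) by ring.
apply Rmult_le_compat; try nra.
Qed.

Lemma Rb_nz_gen (u : C) (D : C -> Prop) (Rb : R -> C -> C) z :
  (forall s t, D s -> -1 <= t <= 1 -> qq u t s <> RtoC 0) ->
  (forall s t, D s -> -1 <= t <= 1 -> Cmult (Rb t s) (Rb t s) = qq u t s) ->
  D z -> forall t, Rx Rb z t <> RtoC 0.
Proof.
intros Hnz Hsq Dz t E. unfold Rx in E. assert (Ht := clamp_in t).
apply (Hnz z (clamp t) Dz Ht). rewrite <- (Hsq z (clamp t) Dz Ht), E. ring.
Qed.

Lemma sqrt2_sq : sqrt 2 * sqrt 2 = 2.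
Proof. apply sqrt_sqrt. lra. Qed.

Lemma x_range x : 0 <= x <= sqrt 2 -> -1 <= x * x - 1 <= 1.
Proof. intros H. assert (x * x <= sqrt 2 * sqrt 2) by (apply Rmult_le_compat; lra).
rewrite sqrt2_sq in H0. nra. Qed.

Lemma deriv_J (u : C) (D : C -> Prop) (Rb : R -> C -> C) n s :
  open D ->
  (forall s t, D s -> -1 <= t <= 1 -> qq u t s <> RtoC 0) ->
  (forall s t, D s -> -1 <= t <= 1 -> Cmult (Rb t s) (Rb t s) = qq u t s) ->
  (forall s t, D s -> -1 <= t <= 1 ->
           filterlim (fun t' => Rb t' s)
             (within (fun t' => -1 <= t' <= 1) (locally t)) (locally (Rb t s))) ->
  (forall s t, D s -> -1 <= t <= 1 -> @ex_derive C_AbsRing C_NormedModule (fun z => Rb t z) s) ->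
  D s ->
  @is_derive C_AbsRing C_NormedModule (fun z => JJ u Rb z n) s (JD u Rb s n).
Proof.
intros HDo Hnz Hsq Hcont Hhol Ds.
destruct (lower_bound u s Rb (fun t Ht => Hnz s t Ds Ht) (fun t Ht => Hsq s t Ds Ht)) as [m [Hm Hmb]].
destruct (locC_inv s D (HDo s Ds)) as [r0 [Hr0 Hr0D]].
set (W := 1 + Cmod u).
assert (HW : 0 <= W) by (assert (0 <= Cmod u) by apply Cmod_ge_0; unfold W; lra).
set (K0 := W ^ n * (4 / (m * m * m * m * m))).
assert (HK0 : 0 <= K0).
{ unfold K0. apply Rmult_le_pos. apply pow_le; auto. apply Rdiv_le_0_compat. lra.
  repeat apply Rmult_lt_0_compat; lra. }
apply (deriv_from_bound (fun z => JJ u Rb z n) s (JD u Rb s n) (K0 * sqrt 2) (Rmin r0 (m * m / 4))).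
{ apply Rmin_pos; nra. }
{ apply Rmult_le_pos; auto. apply sqrt_pos. }
intros z Hz.
assert (Hz1 : Cmod (Cminus z s) < r0) by (eapply Rlt_le_trans; [exact Hz|apply Rmin_l]).
assert (Hz2 : Cmod (Cminus z s) < m * m / 4) by (eapply Rlt_le_trans; [exact Hz|apply Rmin_r]).
assert (Dz : D z) by auto.
assert (CCz : forall t, CC (Rx Rb z) t) by (apply CC_Rx; intros; apply Hcont; auto).
assert (CCs : forall t, CC (Rx Rb s) t) by (apply CC_Rx; intros; apply Hcont; auto).
assert (Nz := Rb_nz_gen u D Rb z Hnz Hsq Dz).
assert (Ns := Rb_nz_gen u D Rb s Hnz Hsq Ds).
assert (I1 : @is_RInt C_R_NormedModule (kk u Rb z n) 0 (sqrt 2) (JJ u Rb z n)).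
{ apply (@RInt_correct C_R_CompleteNormedModule). apply ex_RInt_CC. intros; apply CC_kk; auto. }
assert (I2 : @is_RInt C_R_NormedModule (kk u Rb s n) 0 (sqrt 2) (JJ u Rb s n)).
{ apply (@RInt_correct C_R_CompleteNormedModule). apply ex_RInt_CC. intros; apply CC_kk; auto. }
assert (I3 : @is_RInt C_R_NormedModule (kd u Rb s n) 0 (sqrt 2) (JD u Rb s n)).
{ apply (@RInt_correct C_R_CompleteNormedModule). apply ex_RInt_CC. intros; apply CC_kd; auto. }
assert (I4 := is_RInt_Cmult _ _ _ _ (Cminus z s) I3).
assert (I5 := is_RInt_minus _ _ _ _ _ _ (is_RInt_minus _ _ _ _ _ _ I1 I2) I4).
change (Cmod (Cminus (Cminus (JJ u Rb z n) (JJ u Rb s n)) (Cmult (Cminus z s) (JD u Rb s n)))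
  <= K0 * sqrt 2 * (Cmod (Cminus z s) * Cmod (Cminus z s))).
replace (K0 * sqrt 2 * (Cmod (Cminus z s) * Cmod (Cminus z s))) with
  (K0 * (Cmod (Cminus z s) * Cmod (Cminus z s)) * (sqrt 2 - 0)) by ring.
eapply (RInt_Cmod_le _ 0 (sqrt 2)). apply sqrt_pos. 2: exact I5.
intros x Hx. simpl. unfold kk, kd, Rx.
assert (Ht := x_range x Hx). rewrite !clamp_id by exact Ht.
apply point_bound.
- exact Hm.
- apply Hmb; auto.
- apply (sign_lemma u s z Rb D m r0 (x * x - 1)). exact Hm. exact Hr0. exact Hr0D.
  intros w Dw; apply Hsq; auto. intros w Dw; apply Hhol; auto. apply Hmb; auto. exact Hz.
- lra.
- rewrite (Hsq z _ Dz Ht), (Hsq s _ Ds Ht). unfold qq. ring.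
- unfold wx, W. eapply Rle_trans. apply Cmod_triangle. rewrite Cmod_R.
  assert (Rabs (x * x - 1) <= 1) by (apply Rabs_le; lra). lra.
Qed.

Lemma CC_eq_left (P Q : R -> C) c : 0 < c -> CC P c -> CC Q c ->
  (forall y, 0 < y < c -> P y = Q y) -> P c = Q c.
Proof.
intros Hc HP HQ E.
assert (H : forall eps, 0 < eps -> Cmod (Cminus (P c) (Q c)) < eps).
{ intros eps He. destruct (HP (eps/2) ltac:(lra)) as [d1 [Hd1 H1]].
  destruct (HQ (eps/2) ltac:(lra)) as [d2 [Hd2 H2]].
  set (d := Rmin c (Rmin d1 d2)).
  assert (Hd : 0 < d) by (repeat apply Rmin_pos; lra).
  assert (Hdc : d <= c) by apply Rmin_l.
  assert (Hd12 : d <= Rmin d1 d2) by apply Rmin_r.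
  assert (Hdd1 : Rmin d1 d2 <= d1) by apply Rmin_l. assert (Hdd2 : Rmin d1 d2 <= d2) by apply Rmin_r.
  set (y := c - d / 2).
  assert (Hy : Rabs (y - c) < Rmin d1 d2). { unfold y. rewrite Rabs_left by lra. lra. }
  specialize (H1 y ltac:(lra)). specialize (H2 y ltac:(lra)).
  rewrite (E y) in H1 by (unfold y; lra).
  replace (Cminus (P c) (Q c)) with (Cplus (Copp (Cminus (Q y) (P c))) (Cminus (Q y) (Q c))) by ring.
  eapply Rle_lt_trans. apply Cmod_triangle. rewrite Cmod_opp. lra. }
apply Ceq_minus. apply Cmod_eq_0.
assert (0 <= Cmod (Cminus (P c) (Q c))) by apply Cmod_ge_0.
destruct (Req_dec (Cmod (Cminus (P c) (Q c))) 0) as [E0|N0]; auto.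
assert (Hp : 0 < Cmod (Cminus (P c) (Q c))) by lra. specialize (H _ Hp). lra.
Qed.

Lemma ftc_left (F f : R -> C) c : 0 < c -> (forall x, CC f x) -> CC F c ->
  (forall b, 0 < b < c -> forall x, 0 <= x <= b -> HD F x (f x)) ->
  RIntC f 0 c = Cminus (F c) (F 0).
Proof.
intros Hc Cf CF HF.
apply (CC_eq_left (fun b => RIntC f 0 b) (fun b => Cminus (F b) (F 0))); auto.
- apply continuous_CC. apply (continuous_RInt_1 f 0 c).
  apply filter_forall. intros x. apply (@RInt_correct C_R_CompleteNormedModule). apply ex_RInt_CC. auto.
- apply (CC_minus F (fun _ => F 0)); auto. apply CC_const.
- intros y Hy. apply (@is_RInt_unique C_R_CompleteNormedModule). apply (@is_RInt_derive C_R_CompleteNormedModule).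
  + rewrite Rmin_left, Rmax_right by lra. intros x Hx. apply HD_is_derive. apply (HF y); auto.
  + intros x _. apply CC_continuous. auto.
Qed.

Lemma HD_w u x : HD (wx u) x (RtoC (2 * x)).
Proof.
replace (RtoC (2 * x)) with (Cplus (RtoC (2 * x)) (RtoC 0)) by ring.
unfold wx. apply (HD_plus (fun y => RtoC (y * y - 1)) (fun _ => u)). apply HD_sq. apply HD_const.
Qed.

Lemma y_range x y : 0 <= x < sqrt 2 -> Rabs (y - x) < sqrt 2 - x -> -1 <= y * y - 1 <= 1.
Proof.
intros Hx Hy. apply Rabs_def2 in Hy.
assert (Hs : 0 < sqrt 2) by (apply sqrt_lt_R0; lra).
assert (H2 := sqrt2_sq). nra.
Qed.

Lemma HD_r u (Rb : R -> C -> C) s x :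
  (forall t, -1 <= t <= 1 -> Cmult (Rb t s) (Rb t s) = qq u t s) ->
  (forall t, CC (Rx Rb s) t) -> (forall t, Rx Rb s t <> RtoC 0) ->
  0 <= x < sqrt 2 ->
  HD (fun y => Rx Rb s (y * y - 1)) x (Cdiv (Cmult (RtoC (2 * x)) (wx u x)) (Rx Rb s (x * x - 1))).
Proof.
intros Hsq CCs Ns Hx.
set (r := fun y => Rx Rb s (y * y - 1)).
assert (Cr : forall y, CC r y) by (intros; apply CC_Rxsq; auto).
set (Q := fun y => Cplus (Cmult (wx u y) (wx u y)) s).
assert (HQ : HD Q x (Cplus (Cplus (Cmult (RtoC (2 * x)) (wx u x)) (Cmult (RtoC (2 * x)) (wx u x))) (RtoC 0))).
{ unfold Q. apply (HD_plus (fun y => Cmult (wx u y) (wx u y)) (fun _ => s)).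
  apply HD_mult; apply HD_w. apply HD_const. }
assert (Nx : r x <> RtoC 0) by apply Ns.
destruct (Cr x (Cmod (r x)) ltac:(apply Cmod_gt_0; auto)) as [d1 [Hd1 H1]].
assert (HF := HD_factor Q r (fun y => Cinv (Cplus (r y) (r x))) x _ HQ).
replace (Cdiv (Cmult (RtoC (2 * x)) (wx u x)) (Rx Rb s (x * x - 1))) with
  (Cmult (Cplus (Cplus (Cmult (RtoC (2 * x)) (wx u x)) (Cmult (RtoC (2 * x)) (wx u x))) (RtoC 0))
         (Cinv (Cplus (r x) (r x)))).
2:{ unfold r. field. split; auto. replace (Cplus (Rx Rb s (x * x - 1)) (Rx Rb s (x * x - 1)))
      with (Cmult (RtoC 2) (Rx Rb s (x * x - 1))) by ring.
    apply Cmult_neq_0; auto. intro E; injection E; lra. }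
apply HF.
- exists (Rmin (sqrt 2 - x) d1). split. apply Rmin_pos; lra.
  intros y Hy.
  assert (Hy1 : Rabs (y - x) < sqrt 2 - x) by (eapply Rlt_le_trans; [exact Hy|apply Rmin_l]).
  assert (Hy2 : Rabs (y - x) < d1) by (eapply Rlt_le_trans; [exact Hy|apply Rmin_r]).
  specialize (H1 y Hy2).
  assert (Ny : Cplus (r y) (r x) <> RtoC 0).
  { intro E. replace (Cminus (r y) (r x)) with (Copp (Cmult (RtoC 2) (r x))) in H1.
    2:{ replace (r y) with (Cminus (Cplus (r y) (r x)) (r x)) by ring. rewrite E. ring. }
    rewrite Cmod_opp, Cmod_mult, Cmod_R, Rabs_pos_eq in H1 by lra.
    assert (0 < Cmod (r x)) by (apply Cmod_gt_0; auto). lra. }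
  assert (Ey : Cmult (r y) (r y) = Q y).
  { unfold r, Rx, Q, wx. rewrite clamp_id by (apply (y_range x y); auto). rewrite Hsq. unfold qq. simpl. ring.
    apply (y_range x y); auto. }
  assert (Ex : Cmult (r x) (r x) = Q x).
  { unfold r, Rx, Q, wx. assert (Hxr : -1 <= x * x - 1 <= 1) by (apply (y_range x x); auto; rewrite Rminus_diag, Rabs_R0; lra).
    rewrite clamp_id by exact Hxr. rewrite Hsq by exact Hxr. unfold qq. simpl. ring. }
  rewrite <- Ey, <- Ex. field. exact Ny.
- apply CC_inv. apply (CC_plus r (fun _ => r x)); auto. apply CC_const.
  replace (Cplus (r x) (r x)) with (Cmult (RtoC 2) (r x)) by ring.
  apply Cmult_neq_0; auto. intro E; injection E; lra.
Qed.

Definition f1 u Rb s x := Cplus (Cplus (Cmult (Cinv (RtoC 2)) (kk u Rb s 0 x)) (Cmult (RtoC 2) (kd u Rb s 2 x)))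
   (Cmult (Cmult (RtoC 2) (Cminus (RtoC 1) u)) (kd u Rb s 1 x)).
Definition F1 Rb s y := Cmult (RtoC y) (Cinv (Rx Rb s (y * y - 1))).

Lemma HD_F1 u (Rb : R -> C -> C) s x :
  (forall t, -1 <= t <= 1 -> Cmult (Rb t s) (Rb t s) = qq u t s) ->
  (forall t, CC (Rx Rb s) t) -> (forall t, Rx Rb s t <> RtoC 0) ->
  0 <= x < sqrt 2 -> HD (F1 Rb s) x (f1 u Rb s x).
Proof.
intros Hsq CCs Ns Hx.
assert (H := HD_mult (fun y => RtoC y) (fun y => Cinv (Rx Rb s (y * y - 1))) x _ _ (HD_id x)
   (HD_inv _ x _ (HD_r u Rb s x Hsq CCs Ns Hx) (Ns _))).
unfold F1. match type of H with HD _ _ ?l => replace (f1 u Rb s x) with l end. exact H.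
assert (N := Ns (x * x - 1)). set (r := Rx Rb s (x * x - 1)) in *.
unfold f1, kk, kd, wx. fold r. simpl Cpow.
rewrite RtoC_minus, !RtoC_mult. field. auto.
Qed.

Definition f2 u Rb s x := Cplus (Cplus (Cplus (Cmult (Cdiv (RtoC 3) (RtoC 2)) (kk u Rb s 1 x))
   (Cmult (Cminus (RtoC 1) u) (kk u Rb s 0 x))) (Cmult (RtoC 2) (kd u Rb s 3 x)))
   (Cmult (Cmult (RtoC 2) (Cminus (RtoC 1) u)) (kd u Rb s 2 x)).
Definition F2 u Rb s y := Cmult (Cmult (RtoC y) (wx u y)) (Cinv (Rx Rb s (y * y - 1))).

Lemma HD_F2 u (Rb : R -> C -> C) s x :
  (forall t, -1 <= t <= 1 -> Cmult (Rb t s) (Rb t s) = qq u t s) ->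
  (forall t, CC (Rx Rb s) t) -> (forall t, Rx Rb s t <> RtoC 0) ->
  0 <= x < sqrt 2 -> HD (F2 u Rb s) x (f2 u Rb s x).
Proof.
intros Hsq CCs Ns Hx.
assert (H := HD_mult (fun y => Cmult (RtoC y) (wx u y)) (fun y => Cinv (Rx Rb s (y * y - 1))) x _ _
   (HD_mult (fun y => RtoC y) (wx u) x _ _ (HD_id x) (HD_w u x))
   (HD_inv _ x _ (HD_r u Rb s x Hsq CCs Ns Hx) (Ns _))).
unfold F2. match type of H with HD _ _ ?l => replace (f2 u Rb s x) with l end. exact H.
assert (N := Ns (x * x - 1)). set (r := Rx Rb s (x * x - 1)) in *.
unfold f2, kk, kd, wx. fold r. simpl Cpow.
rewrite RtoC_minus, !RtoC_mult. field. auto.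
Qed.

Lemma sqrt2_pos : 0 < sqrt 2. Proof. apply sqrt_lt_R0; lra. Qed.

Lemma ident2 u (Rb : R -> C -> C) s :
  (forall t, -1 <= t <= 1 -> Cmult (Rb t s) (Rb t s) = qq u t s) ->
  (forall t, CC (Rx Rb s) t) -> (forall t, Rx Rb s t <> RtoC 0) ->
  Cplus (Cplus (Cmult (Cinv (RtoC 2)) (JJ u Rb s 0)) (Cmult (RtoC 2) (JD u Rb s 2)))
        (Cmult (Cmult (RtoC 2) (Cminus (RtoC 1) u)) (JD u Rb s 1))
  = Cminus (F1 Rb s (sqrt 2)) (F1 Rb s 0).
Proof.
intros Hsq CCs Ns.
assert (Ik : forall n, @is_RInt C_R_NormedModule (kk u Rb s n) 0 (sqrt 2) (JJ u Rb s n)).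
{ intros n. apply (@RInt_correct C_R_CompleteNormedModule). apply ex_RInt_CC. intros; apply CC_kk; auto. }
assert (Id : forall n, @is_RInt C_R_NormedModule (kd u Rb s n) 0 (sqrt 2) (JD u Rb s n)).
{ intros n. apply (@RInt_correct C_R_CompleteNormedModule). apply ex_RInt_CC. intros; apply CC_kd; auto. }
assert (I1 : @is_RInt C_R_NormedModule (f1 u Rb s) 0 (sqrt 2)
  (Cplus (Cplus (Cmult (Cinv (RtoC 2)) (JJ u Rb s 0)) (Cmult (RtoC 2) (JD u Rb s 2)))
        (Cmult (Cmult (RtoC 2) (Cminus (RtoC 1) u)) (JD u Rb s 1)))).
{ exact (is_RInt_plus _ _ _ _ _ _ (is_RInt_plus _ _ _ _ _ _ (is_RInt_Cmult _ _ _ _ _ (Ik 0%nat))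
     (is_RInt_Cmult _ _ _ _ _ (Id 2%nat))) (is_RInt_Cmult _ _ _ _ _ (Id 1%nat))). }
rewrite <- (@is_RInt_unique C_R_CompleteNormedModule _ _ _ _ I1).
apply ftc_left. apply sqrt2_pos.
- intros x. unfold f1.
  apply (CC_plus (fun x => Cplus (Cmult (Cinv (RtoC 2)) (kk u Rb s 0 x)) (Cmult (RtoC 2) (kd u Rb s 2 x)))
                 (fun x => Cmult (Cmult (RtoC 2) (Cminus (RtoC 1) u)) (kd u Rb s 1 x))).
  apply (CC_plus (fun x => Cmult (Cinv (RtoC 2)) (kk u Rb s 0 x)) (fun x => Cmult (RtoC 2) (kd u Rb s 2 x))).
  apply (CC_mult (fun _ => _) (kk u Rb s 0)). apply CC_const. apply CC_kk; auto.
  apply (CC_mult (fun _ => _) (kd u Rb s 2)). apply CC_const. apply CC_kd; auto.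
  apply (CC_mult (fun _ => _) (kd u Rb s 1)). apply CC_const. apply CC_kd; auto.
- unfold F1. apply (CC_mult (fun y => RtoC y) (fun y => Cinv (Rx Rb s (y * y - 1)))).
  apply (CC_RtoC (fun y => y)). apply continuous_id. apply CC_inv. apply CC_Rxsq; auto. auto.
- intros b Hb x Hx. apply HD_F1; auto. lra.
Qed.

Lemma ident3 u (Rb : R -> C -> C) s :
  (forall t, -1 <= t <= 1 -> Cmult (Rb t s) (Rb t s) = qq u t s) ->
  (forall t, CC (Rx Rb s) t) -> (forall t, Rx Rb s t <> RtoC 0) ->
  Cplus (Cplus (Cplus (Cmult (Cdiv (RtoC 3) (RtoC 2)) (JJ u Rb s 1))
   (Cmult (Cminus (RtoC 1) u) (JJ u Rb s 0))) (Cmult (RtoC 2) (JD u Rb s 3)))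
   (Cmult (Cmult (RtoC 2) (Cminus (RtoC 1) u)) (JD u Rb s 2))
  = Cminus (F2 u Rb s (sqrt 2)) (F2 u Rb s 0).
Proof.
intros Hsq CCs Ns.
assert (Ik : forall n, @is_RInt C_R_NormedModule (kk u Rb s n) 0 (sqrt 2) (JJ u Rb s n)).
{ intros n. apply (@RInt_correct C_R_CompleteNormedModule). apply ex_RInt_CC. intros; apply CC_kk; auto. }
assert (Id : forall n, @is_RInt C_R_NormedModule (kd u Rb s n) 0 (sqrt 2) (JD u Rb s n)).
{ intros n. apply (@RInt_correct C_R_CompleteNormedModule). apply ex_RInt_CC. intros; apply CC_kd; auto. }
assert (I1 : @is_RInt C_R_NormedModule (f2 u Rb s) 0 (sqrt 2)
  (Cplus (Cplus (Cplus (Cmult (Cdiv (RtoC 3) (RtoC 2)) (JJ u Rb s 1))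
   (Cmult (Cminus (RtoC 1) u) (JJ u Rb s 0))) (Cmult (RtoC 2) (JD u Rb s 3)))
   (Cmult (Cmult (RtoC 2) (Cminus (RtoC 1) u)) (JD u Rb s 2)))).
{ exact (is_RInt_plus _ _ _ _ _ _ (is_RInt_plus _ _ _ _ _ _ (is_RInt_plus _ _ _ _ _ _
     (is_RInt_Cmult _ _ _ _ _ (Ik 1%nat)) (is_RInt_Cmult _ _ _ _ _ (Ik 0%nat)))
     (is_RInt_Cmult _ _ _ _ _ (Id 3%nat))) (is_RInt_Cmult _ _ _ _ _ (Id 2%nat))). }
rewrite <- (@is_RInt_unique C_R_CompleteNormedModule _ _ _ _ I1).
apply ftc_left. apply sqrt2_pos.
- intros x. unfold f2.
  apply (CC_plus (fun x => Cplus (Cplus (Cmult (Cdiv (RtoC 3) (RtoC 2)) (kk u Rb s 1 x))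
   (Cmult (Cminus (RtoC 1) u) (kk u Rb s 0 x))) (Cmult (RtoC 2) (kd u Rb s 3 x)))
   (fun x => Cmult (Cmult (RtoC 2) (Cminus (RtoC 1) u)) (kd u Rb s 2 x))).
  apply (CC_plus (fun x => Cplus (Cmult (Cdiv (RtoC 3) (RtoC 2)) (kk u Rb s 1 x))
   (Cmult (Cminus (RtoC 1) u) (kk u Rb s 0 x))) (fun x => Cmult (RtoC 2) (kd u Rb s 3 x))).
  apply (CC_plus (fun x => Cmult (Cdiv (RtoC 3) (RtoC 2)) (kk u Rb s 1 x))
   (fun x => Cmult (Cminus (RtoC 1) u) (kk u Rb s 0 x))).
  apply (CC_mult (fun _ => _) (kk u Rb s 1)). apply CC_const. apply CC_kk; auto.
  apply (CC_mult (fun _ => _) (kk u Rb s 0)). apply CC_const. apply CC_kk; auto.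
  apply (CC_mult (fun _ => _) (kd u Rb s 3)). apply CC_const. apply CC_kd; auto.
  apply (CC_mult (fun _ => _) (kd u Rb s 2)). apply CC_const. apply CC_kd; auto.
- unfold F2. apply (CC_mult (fun y => Cmult (RtoC y) (wx u y)) (fun y => Cinv (Rx Rb s (y * y - 1)))).
  apply (CC_mult (fun y => RtoC y) (wx u)). apply (CC_RtoC (fun y => y)). apply continuous_id.
  intros; eapply HD_CC. apply HD_w.
  apply CC_inv. apply CC_Rxsq; auto. auto.
- intros b Hb x Hx. apply HD_F2; auto. lra.
Qed.

Lemma JD_rec u (Rb : R -> C -> C) s n :
  (forall t, -1 <= t <= 1 -> Cmult (Rb t s) (Rb t s) = qq u t s) ->
  (forall t, CC (Rx Rb s) t) -> (forall t, Rx Rb s t <> RtoC 0) ->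
  JD u Rb s (n + 2) = Cminus (Copp (Cmult (Cinv (RtoC 2)) (JJ u Rb s n))) (Cmult s (JD u Rb s n)).
Proof.
intros Hsq CCs Ns.
assert (Ik : @is_RInt C_R_NormedModule (kk u Rb s n) 0 (sqrt 2) (JJ u Rb s n)).
{ apply (@RInt_correct C_R_CompleteNormedModule). apply ex_RInt_CC. intros; apply CC_kk; auto. }
assert (Id : @is_RInt C_R_NormedModule (kd u Rb s n) 0 (sqrt 2) (JD u Rb s n)).
{ apply (@RInt_correct C_R_CompleteNormedModule). apply ex_RInt_CC. intros; apply CC_kd; auto. }
assert (I1 := is_RInt_minus _ _ _ _ _ _ (is_RInt_Cmult _ _ _ _ (Copp (Cinv (RtoC 2))) Ik) (is_RInt_Cmult _ _ _ _ s Id)).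
unfold JD at 1. apply (@is_RInt_unique C_R_CompleteNormedModule).
replace (Cminus (Copp (Cmult (Cinv (RtoC 2)) (JJ u Rb s n))) (Cmult s (JD u Rb s n))) with
  (minus (Cmult (Copp (Cinv (RtoC 2))) (JJ u Rb s n)) (Cmult s (JD u Rb s n))).
2:{ change (Cminus (Cmult (Copp (Cinv (RtoC 2))) (JJ u Rb s n)) (Cmult s (JD u Rb s n)) =
     Cminus (Copp (Cmult (Cinv (RtoC 2)) (JJ u Rb s n))) (Cmult s (JD u Rb s n))). ring. }
eapply (@is_RInt_ext C_R_NormedModule). 2: exact I1.
rewrite Rmin_left, Rmax_right by (left; apply sqrt2_pos).
intros x Hx. simpl.
change (Cminus (Cmult (Copp (Cinv (RtoC 2))) (kk u Rb s n x)) (Cmult s (kd u Rb s n x)) = kd u Rb s (n + 2) x).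
assert (Ht : -1 <= x * x - 1 <= 1) by (apply x_range; lra).
assert (N := Ns (x * x - 1)).
assert (E : Cmult (Rx Rb s (x * x - 1)) (Rx Rb s (x * x - 1)) = Cplus (Cmult (wx u x) (wx u x)) s).
{ unfold Rx. rewrite clamp_id by exact Ht. rewrite Hsq by exact Ht. unfold qq, wx. simpl. ring. }
unfold kk, kd. rewrite Cpow_add_r. set (r := Rx Rb s (x * x - 1)) in *. simpl Cpow.
replace s with (Cminus (Cmult r r) (Cmult (wx u x) (wx u x))) at 1 by (rewrite E; ring).
field. auto.
Qed.

Lemma is_derive_Cscal (f : C -> C) s l c :
  @is_derive C_AbsRing C_NormedModule f s l ->
  @is_derive C_AbsRing C_NormedModule (fun z => Cmult c (f z)) s (Cmult c l).
Proof.
intros [_ Hd]. split. apply is_linear_scal_l.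
intros x Hx. specialize (Hd x Hx). intros eps.
assert (Hc : 0 <= Cmod c) by apply Cmod_ge_0.
assert (He : 0 < eps / (Cmod c + 1)) by (apply Rdiv_lt_0_compat; [apply cond_pos|lra]).
generalize (Hd (mkposreal _ He)). apply filter_imp. intros y Hy. simpl in Hy.
change (Cmod (Cminus (Cminus (f y) (f x)) (Cmult (Cminus y x) l)) <= eps / (Cmod c + 1) * Cmod (Cminus y x)) in Hy.
change (Cmod (Cminus (Cminus (Cmult c (f y)) (Cmult c (f x))) (Cmult (Cminus y x) (Cmult c l))) <= eps * Cmod (Cminus y x)).
replace (Cminus (Cminus (Cmult c (f y)) (Cmult c (f x))) (Cmult (Cminus y x) (Cmult c l)))
  with (Cmult c (Cminus (Cminus (f y) (f x)) (Cmult (Cminus y x) l))) by ring.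
rewrite Cmod_mult.
assert (T : Cmod c * (eps / (Cmod c + 1)) <= eps).
{ assert (0 < eps) by apply cond_pos. apply Rmult_le_reg_r with (Cmod c + 1). lra.
  field_simplify; nra. }
assert (0 <= Cmod (Cminus y x)) by apply Cmod_ge_0.
assert (0 <= Cmod (Cminus (Cminus (f y) (f x)) (Cmult (Cminus y x) l))) by apply Cmod_ge_0.
apply Rle_trans with (Cmod c * (eps / (Cmod c + 1) * Cmod (Cminus y x))).
apply Rmult_le_compat_l; auto. nra.
Qed.

Theorem lemma3p3
  (u a sa : C) (D : C -> Prop) (Rb : R -> C -> C)
  (Ha : a <> RtoC 0)
  (Hsa : Cmult sa sa = a)
  (HD : open D)
  (Hnz : forall s t, D s -> -1 <= t <= 1 ->
           Cplus (Cpow (Cplus (RtoC t) u) 2) s <> RtoC 0)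
  (Hsq : forall s t, D s -> -1 <= t <= 1 ->
           Cmult (Rb t s) (Rb t s) = Cplus (Cpow (Cplus (RtoC t) u) 2) s)
  (Hcont : forall s t, D s -> -1 <= t <= 1 ->
           filterlim (fun t' => Rb t' s)
             (within (fun t' => -1 <= t' <= 1) (locally t)) (locally (Rb t s)))
  (Hhol : forall s t, D s -> -1 <= t <= 1 -> ex_derive (fun z => Rb t z) s) :
  let I := Inu u sa Rb in
  let R1 := fun s => Rb 1 s in
  forall s, D s ->
    (forall nu, ex_derive (I nu) s) /\
    (forall nu, C_derive (I (nu + 2)%nat) s =
       Cminus (Copp (Cmult (RtoC (/2)) (I nu s))) (Cmult s (C_derive (I nu) s))) /\
    C_derive (fun z => Cplus (I 2%nat z) (I 1%nat z)) s =
       Cplus (Cminus (Cmult u (C_derive (I 1%nat) s)) (Cmult (RtoC (/4)) (I 0%nat s)))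
             (Cinv (Cmult (RtoC 2) (Cmult sa (R1 s)))) /\
    C_derive (fun z => Cminus (I 3%nat z) (I 1%nat z)) s =
       Cplus (Cplus (Cminus (Cmult (Cminus (Cpow u 2) (Cmult (RtoC 2) u)) (C_derive (I 1%nat) s))
                            (Cmult (RtoC (3/4)) (I 1%nat s)))
                    (Cmult (Cdiv (Cminus u (RtoC 1)) (RtoC 4)) (I 0%nat s)))
             (Cdiv u (Cmult sa (R1 s))).
Proof.
intros I R1 s Ds.
assert (Hnz' : forall s t, D s -> -1 <= t <= 1 -> qq u t s <> RtoC 0) by exact Hnz.
assert (Hsq' : forall s t, D s -> -1 <= t <= 1 -> Cmult (Rb t s) (Rb t s) = qq u t s) by exact Hsq.
assert (Nsa : sa <> RtoC 0). { intro E. apply Ha. rewrite <- Hsa, E. ring. }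
assert (Ns2 : RtoC (sqrt 2) <> RtoC 0). { intro E. injection E. assert (T := sqrt2_pos). lra. }
set (c := Cinv (Cmult (RtoC (sqrt 2)) sa)).
assert (CCz : forall z, D z -> forall t, CC (Rx Rb z) t) by (intros z Dz; apply CC_Rx; intros; apply Hcont; auto).
assert (Nz : forall z, D z -> forall t, Rx Rb z t <> RtoC 0) by (intros z Dz; apply (Rb_nz_gen u D Rb z Hnz' Hsq' Dz)).
assert (EI : forall n z, D z -> I n z = Cmult c (JJ u Rb z n)).
{ intros n z Dz. unfold I, Inu, JJ. fold c. rewrite <- (subst_gen u Rb z n (CCz z Dz) (Nz z Dz)). reflexivity. }
assert (DI : forall n, @is_derive C_AbsRing C_NormedModule (I n) s (Cmult c (JD u Rb s n))).
{ intros n.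
  assert (H1 := deriv_J u D Rb n s HD Hnz' Hsq' Hcont Hhol Ds).
  assert (H2 := is_derive_Cscal _ s _ c H1).
  eapply is_derive_ext_loc. 2: exact H2.
  destruct (locC_inv s D (HD s Ds)) as [e [He HeD]].
  exists (mkposreal e He). intros z Hz. symmetry. apply EI. apply HeD. exact Hz. }
assert (CD : forall n, C_derive (I n) s = Cmult c (JD u Rb s n)).
{ intros n. apply is_C_derive_unique. apply DI. }
assert (Is : forall n, I n s = Cmult c (JJ u Rb s n)) by (intros; apply EI; auto).
assert (Hsqs : forall t, -1 <= t <= 1 -> Cmult (Rb t s) (Rb t s) = qq u t s) by (intros; apply Hsq'; auto).
assert (CCs := CCz s Ds). assert (Nss := Nz s Ds).
assert (NR1 : R1 s <> RtoC 0). { unfold R1. assert (T := Nss 1). unfold Rx in T. rewrite clamp_id in T by lra. exact T. }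
assert (Ecl : Rx Rb s (sqrt 2 * sqrt 2 - 1) = R1 s).
{ unfold Rx, R1. rewrite sqrt2_sq. replace (2 - 1) with 1 by ring. rewrite clamp_id by lra. reflexivity. }
assert (E2 := ident2 u Rb s Hsqs CCs Nss).
assert (E3 := ident3 u Rb s Hsqs CCs Nss).
unfold F1 in E2. unfold F2, wx in E3. rewrite Ecl in E2, E3. rewrite sqrt2_sq in E3.
assert (HJD2 : JD u Rb s 2 = Cmult (Cinv (RtoC 2)) (Cminus (Cminus (Cminus (Cmult (RtoC (sqrt 2)) (Cinv (R1 s))) (Cmult (RtoC 0) (Cinv (Rx Rb s (0 * 0 - 1)))))
   (Cmult (Cinv (RtoC 2)) (JJ u Rb s 0))) (Cmult (Cmult (RtoC 2) (Cminus (RtoC 1) u)) (JD u Rb s 1)))).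
{ rewrite <- E2. match goal with |- ?a = ?b => change (@eq C a b) end. field. }
assert (HJD3 : JD u Rb s 3 = Cmult (Cinv (RtoC 2)) (Cminus (Cminus (Cminus (Cminus
   (Cmult (Cmult (RtoC (sqrt 2)) (Cplus (RtoC (2 - 1)) u)) (Cinv (R1 s)))
   (Cmult (Cmult (RtoC 0) (Cplus (RtoC (0 * 0 - 1)) u)) (Cinv (Rx Rb s (0 * 0 - 1)))))
   (Cmult (Cdiv (RtoC 3) (RtoC 2)) (JJ u Rb s 1))) (Cmult (Cminus (RtoC 1) u) (JJ u Rb s 0)))
   (Cmult (Cmult (RtoC 2) (Cminus (RtoC 1) u)) (JD u Rb s 2)))).
{ rewrite <- E3. match goal with |- ?a = ?b => change (@eq C a b) end. field. }
split; [|split; [|split]].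
- intros nu. exists (Cmult c (JD u Rb s nu)). apply DI.
- intros nu. rewrite !CD, Is. rewrite JD_rec by auto. rewrite RtoC_inv by lra. ring.
- rewrite (is_C_derive_unique (fun z => Cplus (I 2%nat z) (I 1%nat z)) s (Cplus (Cmult c (JD u Rb s 2)) (Cmult c (JD u Rb s 1))))
    by exact (is_derive_plus _ _ _ _ _ (DI 2%nat) (DI 1%nat)).
  rewrite CD, Is, HJD2. rewrite RtoC_inv by lra. unfold c. field. repeat split; auto.
- rewrite (is_C_derive_unique (fun z => Cminus (I 3%nat z) (I 1%nat z)) s (Cminus (Cmult c (JD u Rb s 3)) (Cmult c (JD u Rb s 1))))
    by exact (is_derive_minus _ _ _ _ _ (DI 3%nat) (DI 1%nat)).
  rewrite !CD, !Is, HJD3, HJD2. rewrite RtoC_div by lra. unfold c.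
  replace (RtoC (2 - 1)) with (RtoC 1) by (f_equal; ring).
  simpl Cpow. field. repeat split; auto.
Qed.
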